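(* Let $E$ be a finite-dimensional real vector space with two symplectic forms $\omega_0$ and $\omega_1$. The following are equivalent: (1) every form $(1-t)\omega_0+t\omega_1$, $t\in[0,1]$, is symplectic; (2) every form $\omega_0+\tau\omega_1$, $\tau\ge0$, is symplectic; (3) there is a complex structure $J$ on $E$ tamed by both $\omega_0$ and $\omega_1$.
   Context: A complex structure $J$ on $E$ is tamed by a symplectic form $\omega$ if $\omega(v,Jv)>0$ for every nonzero $v\in E$. *)

(* Defs.v *)
From HB Require Import structures.
From mathcomp Require Import all_boot all_order all_algebra.
From mathcomp Require Import reals.
Set Implicit Arguments. Unset Strict Implicit. Unset Printing Implicit Defensive.
Import Order.TTheory GRing.Theory Num.Theory.
Local Open Scope ring_scope.

(* The finite-dimensional real vector space E is modelled as R^n = 'rV[R]_n,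
   with R : realType.  A bilinear form on E is given by its Gram matrix W:
   omega(u,v) = u W v^T.  Linear maps act on row vectors on the right. *)

Definition bform (R : realType) (n : nat) (W : 'M[R]_n) (u v : 'rV[R]_n) : R :=
  (u *m W *m v^T) 0 0.

Definition symplectic (R : realType) (n : nat) (W : 'M[R]_n) : Prop :=
  (forall v : 'rV[R]_n, bform W v v = 0) /\
  (forall u : 'rV[R]_n, (forall v : 'rV[R]_n, bform W u v = 0) -> u = 0).

Definition complex_structure (R : realType) (n : nat) (J : 'M[R]_n) : Prop :=
  J *m J = - 1%:M.

Definition tamed (R : realType) (n : nat) (W J : 'M[R]_n) : Prop :=
  forall v : 'rV[R]_n, v != 0 -> 0 < bform W v (v *m J).

(* Main.v *)
Require Import Defs.
From HB Require Import structures.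
From mathcomp Require Import all_boot all_order all_algebra.
From mathcomp Require Import reals.
From mathcomp Require Import complex.
From mathcomp Require Import ring lra zify.
Import Order.TTheory GRing.Theory Num.Theory.
Local Open Scope ring_scope.
Set Implicit Arguments. Unset Strict Implicit. Unset Printing Implicit Defensive.

Section Basic.
Variable R : realType.

Definition bf k l (M : 'M[R]_(k,l)) (p : 'rV_k) (q : 'rV_l) : R := (p *m M *m q^T) 0 0.
Definition nrm2 k (p : 'rV[R]_k) : R := (p *m p^T) 0 0.

Lemma bformE n (W : 'M[R]_n) u v : bform W u v = bf W u v. Proof. by []. Qed.

Lemma bf_mul k l k' l' (M : 'M[R]_(k,l)) (P : 'M_(k',k)) (Q : 'M_(l',l)) p q :
  bf M (p *m P) (q *m Q) = bf (P *m M *m Q^T) p q.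
Proof. by rewrite /bf trmx_mul !mulmxA. Qed.

Lemma bfDl k l (M : 'M[R]_(k,l)) p1 p2 q : bf M (p1 + p2) q = bf M p1 q + bf M p2 q.
Proof. by rewrite /bf !mulmxDl mxE. Qed.
Lemma bfDr k l (M : 'M[R]_(k,l)) p q1 q2 : bf M p (q1 + q2) = bf M p q1 + bf M p q2.
Proof. by rewrite /bf linearD /= mulmxDr mxE. Qed.
Lemma bfZl k l (M : 'M[R]_(k,l)) a p q : bf M (a *: p) q = a * bf M p q.
Proof. by rewrite /bf -!scalemxAl mxE. Qed.
Lemma bfZr k l (M : 'M[R]_(k,l)) a p q : bf M p (a *: q) = a * bf M p q.
Proof. by rewrite /bf linearZ /= -scalemxAr mxE. Qed.
Lemma bfNl k l (M : 'M[R]_(k,l)) p q : bf M (- p) q = - bf M p q.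
Proof. by rewrite -scaleN1r bfZl mulN1r. Qed.
Lemma bfNr k l (M : 'M[R]_(k,l)) p q : bf M p (- q) = - bf M p q.
Proof. by rewrite -scaleN1r bfZr mulN1r. Qed.
Lemma bfMD k l (M M' : 'M[R]_(k,l)) p q : bf (M + M') p q = bf M p q + bf M' p q.
Proof. by rewrite /bf mulmxDr mulmxDl mxE. Qed.
Lemma bfMZ k l (M : 'M[R]_(k,l)) a p q : bf (a *: M) p q = a * bf M p q.
Proof. by rewrite /bf -scalemxAr -scalemxAl mxE. Qed.
Lemma bfMN k l (M : 'M[R]_(k,l)) p q : bf (- M) p q = - bf M p q.
Proof. by rewrite -scaleN1r bfMZ mulN1r. Qed.
Lemma bf0M k l p q : bf (0 : 'M[R]_(k,l)) p q = 0.
Proof. by rewrite /bf mulmx0 mul0mx mxE. Qed.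
Lemma bf0l k l (M : 'M[R]_(k,l)) q : bf M 0 q = 0.
Proof. by rewrite /bf !mul0mx mxE. Qed.
Lemma bf0r k l (M : 'M[R]_(k,l)) p : bf M p 0 = 0.
Proof. by rewrite /bf trmx0 mulmx0 mxE. Qed.
Lemma bf_tr k l (M : 'M[R]_(k,l)) p q : bf M p q = bf M^T q p.
Proof.
rewrite /bf; have -> : q *m M^T *m p^T = (p *m M *m q^T)^T.
  by rewrite !trmx_mul trmxK mulmxA.
by rewrite [RHS]mxE.
Qed.
Lemma bf1 k p q : bf (1%:M : 'M[R]_k) p q = bf 1%:M q p.
Proof. by rewrite bf_tr trmx1. Qed.
Lemma nrm2E k (p : 'rV[R]_k) : nrm2 p = \sum_i p 0 i ^+ 2.
Proof. by rewrite /nrm2 mxE; apply: eq_bigr => i _; rewrite mxE expr2. Qed.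
Lemma nrm2_ge0 k (p : 'rV[R]_k) : 0 <= nrm2 p.
Proof. by rewrite nrm2E sumr_ge0 // => i _; rewrite sqr_ge0. Qed.
Lemma nrm2_eq0 k (p : 'rV[R]_k) : (nrm2 p == 0) = (p == 0).
Proof.
apply/idP/idP; last by move/eqP->; rewrite /nrm2 mul0mx mxE.
rewrite nrm2E psumr_eq0 => [/allP H|i _]; last by rewrite sqr_ge0.
apply/eqP/rowP => i; rewrite mxE; apply/eqP; rewrite -sqrf_eq0.
by apply: (implyP (H i (mem_index_enum i))).
Qed.
Lemma nrm2_gt0 k (p : 'rV[R]_k) : p != 0 -> 0 < nrm2 p.
Proof. by move=> hp; rewrite lt_def nrm2_eq0 hp nrm2_ge0. Qed.
Lemma bf1G k l (G : 'M[R]_(k,l)) y p : bf 1%:M (y *m G) p = bf G y p.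
Proof. by rewrite /bf mulmx1. Qed.
Lemma bf1n k (p : 'rV[R]_k) : bf 1%:M p p = nrm2 p.
Proof. by rewrite /bf mulmx1. Qed.


Lemma bf_delta k l (M : 'M[R]_(k,l)) i j : bf M (delta_mx 0 i) (delta_mx 0 j) = M i j.
Proof. by rewrite /bf -rowE trmx_delta -colE !mxE. Qed.

Lemma alt_antisym n (W : 'M[R]_n) : (forall v, bform W v v = 0) ->
  forall u v, bf W u v = - bf W v u.
Proof.
move=> h u v; have := h (u + v); rewrite bformE bfDl !bfDr.
have := h u; have := h v; rewrite !bformE => -> ->.
by rewrite add0r addr0 => /eqP; rewrite addr_eq0 => /eqP.
Qed.

Lemma alt_skew n (W : 'M[R]_n) : (forall v, bform W v v = 0) -> W^T = - W.
Proof.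
move=> h; apply/matrixP => i j; rewrite !mxE -!bf_delta.
by rewrite (alt_antisym h).
Qed.

Lemma free_of_ker r n (A : 'M[R]_(r,n)) : (forall w : 'rV_r, w *m A = 0 -> w = 0) -> row_free A.
Proof.
move=> h; rewrite -kermx_eq0; apply/eqP/row_matrixP => i; rewrite row0.
by apply: h; apply/sub_kermxP; rewrite row_sub.
Qed.

Lemma sympl_unit n (W : 'M[R]_n) : symplectic W -> W \in unitmx.
Proof.
case=> _ hn; rewrite -row_free_unit; apply: free_of_ker => w hw.
by apply: hn => v; rewrite bformE /bf hw mul0mx mxE.
Qed.

Lemma inv_of_free r n (A : 'M[R]_(r,n)) : r = n -> row_free A ->
  exists Qi : 'M[R]_(n, r), Qi *m A = (1%:M : 'M_n) /\ A *m Qi = (1%:M : 'M_r).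
Proof.
move=> e hf; have hfull : row_full A.
  by rewrite /row_full; move: hf; rewrite /row_free => /eqP->; rewrite e.
case/row_fullP: hfull => B hB; case/row_freeP: hf => C hC.
exists B; split => //.
have -> : B = C by rewrite -[B]mulmx1 -hC mulmxA hB mul1mx.
by [].
Qed.

End Basic.

Section Core.
Variable R : realType.
Variables (n k m : nat) (P Q : 'M[R]_(k,n)) (U : 'M[R]_(m,n)).

Local Notation Pm := (col_mx P (col_mx U Q)).

Lemma bf_expand (W : 'M[R]_n) (p s p2 s2 : 'rV[R]_k) (y y2 : 'rV[R]_m) :
  bf W (p *m P + (y *m U + s *m Q)) (p2 *m P + (y2 *m U + s2 *m Q)) =
  bf (P *m W *m P^T) p p2 + bf (P *m W *m U^T) p y2 + bf (P *m W *m Q^T) p s2 +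
  bf (U *m W *m P^T) y p2 + bf (U *m W *m U^T) y y2 + bf (U *m W *m Q^T) y s2 +
  bf (Q *m W *m P^T) s p2 + bf (Q *m W *m U^T) s y2 + bf (Q *m W *m Q^T) s s2.
Proof. rewrite !bfDl !bfDr !bf_mul; ring. Qed.

Lemma Pm_split (w : 'rV[R]_(k + (m + k))) :
  w *m Pm = lsubmx w *m P + (lsubmx (rsubmx w) *m U + rsubmx (rsubmx w) *m Q).
Proof.
by rewrite -{1}(hsubmxK w) mul_row_col -{1}(hsubmxK (rsubmx w)) mul_row_col.
Qed.

Definition Jb (J' : 'M[R]_m) : 'M[R]_(k + (m + k)) :=
  block_mx 0 (row_mx 0 1%:M) (col_mx 0 (- 1%:M)) (block_mx J' 0 0 0).

Lemma Jb_act J' (p s : 'rV[R]_k) (y : 'rV[R]_m) :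
  row_mx p (row_mx y s) *m Jb J' = row_mx (- s) (row_mx (y *m J') p).
Proof.
rewrite /Jb mul_row_block mulmx0 add0r mul_row_col mulmx0 add0r mulmxN mulmx1.
rewrite mul_mx_row mulmx0 mulmx1 mul_row_block !mulmx0 !addr0.
by rewrite add_row_mx add0r addr0.
Qed.

Lemma mx_ext p q (A B : 'M[R]_(p,q)) : (forall w : 'rV_p, w *m A = w *m B) -> A = B.
Proof. by move=> h; apply/row_matrixP => i; rewrite !rowE h. Qed.

Lemma Jb_sq J' : J' *m J' = - 1%:M -> Jb J' *m Jb J' = - 1%:M.
Proof.
move=> hJ; apply: mx_ext => w; rewrite mulmxA -(hsubmxK w) -(hsubmxK (rsubmx w)).
rewrite !Jb_act mulmxN mulmx1 -mulmxA hJ mulmxN mulmx1.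
by rewrite !opp_row_mx.
Qed.

Lemma core (Qi : 'M[R]_(n, k + (m + k))) (J' : 'M[R]_m) :
  Qi *m Pm = 1%:M -> Pm *m Qi = 1%:M -> J' *m J' = - 1%:M ->
  exists J : 'M[R]_n, (J *m J = - 1%:M) /\
   forall v : 'rV[R]_n, exists (p : 'rV[R]_k) (y : 'rV[R]_m) (s : 'rV[R]_k),
     (v != 0 -> [|| p != 0, y != 0 | s != 0]) /\
     forall W : 'M[R]_n, bform W v (v *m J) =
  bf (P *m W *m P^T) p (- s) + bf (P *m W *m U^T) p (y *m J') + bf (P *m W *m Q^T) p p +
  bf (U *m W *m P^T) y (- s) + bf (U *m W *m U^T) y (y *m J') + bf (U *m W *m Q^T) y p +
  bf (Q *m W *m P^T) s (- s) + bf (Q *m W *m U^T) s (y *m J') + bf (Q *m W *m Q^T) s p.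
Proof.
move=> h1 h2 hJ; exists (Qi *m Jb J' *m Pm); split.
  rewrite -!mulmxA (mulmxA Pm) h2 mul1mx (mulmxA (Jb J')) Jb_sq //.
  by rewrite mulNmx mul1mx mulmxN h1.
move=> v; set w := v *m Qi.
have hv : v = w *m Pm by rewrite /w -mulmxA h1 mulmx1.
exists (lsubmx w), (lsubmx (rsubmx w)), (rsubmx (rsubmx w)); split.
  move=> vn0; apply/negPn; apply: (contra _ vn0).
  rewrite !negb_or !negbK => /and3P[/eqP h3 /eqP h4 /eqP h5].
  by apply/eqP; rewrite hv -(hsubmxK w) -(hsubmxK (rsubmx w)) h3 h4 h5 !row_mx0 mul0mx.
move=> W; rewrite bformE.
have -> : v *m (Qi *m Jb J' *m Pm) = (w *m Jb J') *m Pm by rewrite !mulmxA.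
have hw : w = row_mx (lsubmx w) (row_mx (lsubmx (rsubmx w)) (rsubmx (rsubmx w))).
  by rewrite !hsubmxK.
rewrite {1}hv Pm_split; rewrite [in w *m Jb J']hw Jb_act Pm_split.
rewrite !row_mxKl !row_mxKr !row_mxKl.
by rewrite bf_expand.
Qed.

End Core.

Section Pos.
Variable R : realType.

Definition posdef m (S : 'M[R]_m) := forall y : 'rV_m, y != 0 -> 0 < bf S y y.

Lemma posdef_ge0 m (S : 'M[R]_m) y : posdef S -> 0 <= bf S y y.
Proof.
move=> h; have [->|/h/ltW//] := eqVneq y 0; by rewrite bf0l.
Qed.

Lemma amgm k (u v : 'rV[R]_k) a : 0 < a ->
  - (nrm2 u / a) - a / 4 * nrm2 v <= bf 1%:M u v.
Proof.
move=> ha; have := nrm2_ge0 (u + (a / 2) *: v).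
rewrite -bf1n bfDl !bfDr !bfZl !bfZr (bf1 v u) !bf1n => h.
have h2 : 0 <= nrm2 u + a * bf 1%:M u v + a ^+ 2 / 4 * nrm2 v.
  by move: h; congr (_ <= _); field.
have ha' : a != 0 by rewrite gt_eqF.
rewrite -subr_ge0.
have -> : bf 1%:M u v - (- (nrm2 u / a) - a / 4 * nrm2 v) =
   (nrm2 u + a * bf 1%:M u v + a ^+ 2 / 4 * nrm2 v) / a by field.
by rewrite divr_ge0 // ltW.
Qed.

Lemma cs_sym m (S : 'M[R]_m) (x y : 'rV_m) : S^T = S -> posdef S ->
  (bf S y x) ^+ 2 <= bf S y y * bf S x x.
Proof.
move=> hs hp; have [->|xn0] := eqVneq x 0; first by rewrite !bf0r expr0n mulr0.
have ha := hp _ xn0; set a := bf S x x in ha *.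
have := posdef_ge0 (a *: y - bf S y x *: x) hp.
rewrite bfDl !bfDr !bfNl !bfNr !bfZl !bfZr (bf_tr S x y) hs -/a => h.
have h2 : 0 <= a * (a * bf S y y - bf S y x ^+ 2).
  by move: h; congr (_ <= _); ring.
by rewrite -subr_ge0 mulrC; move: h2; rewrite pmulr_rge0.
Qed.


Lemma posdef_sym m (S : 'M[R]_m) : posdef S -> posdef (S + S^T).
Proof. by move=> h y /h hy; rewrite bfMD -bf_tr ltr_wpDl // ltW. Qed.

Lemma posdef_unit m (S : 'M[R]_m) : posdef S -> S \in unitmx.
Proof.
move=> h; rewrite -row_free_unit; apply: free_of_ker => w hw.
by apply/eqP/negPn/negP => /h; rewrite /bf hw mul0mx mxE ltxx.
Qed.

Lemma cs_mat m k (S : 'M[R]_m) (G : 'M[R]_(m,k)) : posdef S ->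
  exists M, 0 <= M /\ forall y, nrm2 (y *m G) <= M * bf S y y.
Proof.
move=> hS; set S' := S + S^T.
have hS' : posdef S' by exact: posdef_sym.
have sS' : S'^T = S' by rewrite /S' linearD /= trmxK addrC.
have uS' := posdef_unit hS'.
pose x (j : 'I_k) := (invmx S' *m col j G)^T.
exists (2 * \sum_j bf S' (x j) (x j)); split.
  by rewrite mulr_ge0 // sumr_ge0 // => j _; apply: posdef_ge0.
move=> y; rewrite nrm2E.
have hx j : bf S' y (x j) = (y *m G) 0 j.
  rewrite /bf /x trmxK mulmxA -(mulmxA _ S') mulmxV // mulmx1.
  by rewrite colE mulmxA -colE mxE.
have hyy : bf S' y y = 2 * bf S y y by rewrite bfMD -bf_tr mulr2n mulrDl !mul1r.
rewrite mulrAC -hyy mulr_sumr.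
apply: ler_sum => j _; rewrite -hx; apply: cs_sym => //.
Qed.

Lemma final_pos m k (S1 : 'M[R]_m) (G1 G2 : 'M[R]_(m,k)) (H : 'M[R]_k) (kp : R) :
  0 < kp -> posdef S1 ->
  exists c, 0 < c /\ forall y p s, [|| p != 0, y != 0 | s != 0] ->
    0 < bf S1 y y + c * (kp * nrm2 p + kp * nrm2 s + bf G1 y p + bf G2 y s
                         + c * bf H s p).
Proof.
move=> kp0 hS.
have [M1 [hM1 bM1]] := cs_mat G1 hS.
have [M2 [hM2 bM2]] := cs_mat G2 hS.
have hI : posdef (1%:M : 'M[R]_k) by move=> p hp; rewrite bf1n nrm2_gt0.
have [M3 [hM3 bM3]] := cs_mat H^T hI.
set E := M1 + M2 + M3 + 1.
have E0 : 0 < E by rewrite /E ltr_wpDl // !addr_ge0.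
set c := kp / (4 * E).
have c0 : 0 < c by rewrite /c divr_gt0 // mulr_gt0.
exists c; split => // y p s hne.
set q := bf S1 y y; set np := nrm2 p; set ns := nrm2 s.
have q0 : 0 <= q by apply: posdef_ge0.
have np0 : 0 <= np by apply: nrm2_ge0.
have ns0 : 0 <= ns by apply: nrm2_ge0.
have kpn : kp != 0 by rewrite gt_eqF.
have En : E != 0 by rewrite gt_eqF.
have hb1 : - (M1 * q / kp) - kp / 4 * np <= bf G1 y p.
  have := amgm (y *m G1) p kp0; rewrite bf1G.
  by apply: le_trans; rewrite lerD2r lerN2 ler_wpM2r // ?invr_ge0 ?ltW //.
have hb2 : - (M2 * q / kp) - kp / 4 * ns <= bf G2 y s.
  have := amgm (y *m G2) s kp0; rewrite bf1G.
  by apply: le_trans; rewrite lerD2r lerN2 ler_wpM2r // ?invr_ge0 ?ltW //.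
have hb3 : - (M3 * np / 2) - 2 / 4 * ns <= bf H s p.
  have := amgm (p *m H^T) s (ltr0Sn _ 1); rewrite bf1G.
  rewrite bf_tr trmxK.
  apply: le_trans; rewrite lerD2r lerN2; apply: ler_wpM2r.
    by rewrite invr_ge0.
  by have := bM3 p; rewrite bf1n.
set b1 := bf G1 y p in hb1 *; set b2 := bf G2 y s in hb2 *;
set b3 := bf H s p in hb3 *.
set r1 := M1 / (4 * E); set r2 := M2 / (4 * E); set u := c * kp.
have u0 : 0 < u by rewrite mulr_gt0.
have F1 : - (r1 * q) - u / 4 * np <= c * b1.
  rewrite -subr_ge0.
  have -> : c * b1 - (- (r1 * q) - u / 4 * np) =
     c * (b1 - (- (M1 * q / kp) - kp / 4 * np)).
    by rewrite /r1 /u /c; field; rewrite kpn En.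
  by apply: mulr_ge0; [exact: ltW | rewrite subr_ge0].
have F2 : - (r2 * q) - u / 4 * ns <= c * b2.
  rewrite -subr_ge0.
  have -> : c * b2 - (- (r2 * q) - u / 4 * ns) =
     c * (b2 - (- (M2 * q / kp) - kp / 4 * ns)) by rewrite /r2 /u /c; field; rewrite kpn En.
  by apply: mulr_ge0; [exact: ltW | rewrite subr_ge0].
have hcM3 : c * M3 <= kp / 4.
  rewrite /c -subr_ge0.
  have -> : kp / 4 - kp / (4 * E) * M3 = kp / (4 * E) * (M1 + M2 + 1) by move: En; rewrite /E => En; field.
  by apply: mulr_ge0; [exact: ltW | rewrite ?addr_ge0].

have hc1 : c <= kp / 4.
  rewrite /c -subr_ge0.
  have -> : kp / 4 - kp / (4 * E) = kp / (4 * E) * (M1 + M2 + M3) by move: En; rewrite /E => En; field.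
  by apply: mulr_ge0; [exact: ltW | rewrite ?addr_ge0].

have F3 : - (u / 8 * np) - u / 8 * ns <= c * (c * b3).
  rewrite -subr_ge0.
  have -> : c * (c * b3) - (- (u / 8 * np) - u / 8 * ns) =
    c * (c * (b3 - (- (M3 * np / 2) - 2 / 4 * ns))) + c * (kp / 8 - c * M3 / 2) * np
    + c * (kp / 8 - c / 2) * ns by rewrite /u; field.
  have hc := ltW c0.
  apply: addr_ge0; first apply: addr_ge0.
  - by apply: mulr_ge0 => //; apply: mulr_ge0 => //; rewrite subr_ge0.
  - by apply: mulr_ge0 => //; apply: mulr_ge0 => //; lra.
  - by apply: mulr_ge0 => //; apply: mulr_ge0 => //; lra.
have hr1 : r1 * q <= q / 4.
  rewrite /r1 mulrC -subr_ge0.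
  have -> : q / 4 - q * (M1 / (4 * E)) = q / (4 * E) * (M2 + M3 + 1).
    by move: En; rewrite /E => En; field.
  by apply: mulr_ge0; [apply: divr_ge0 => //; lra | lra].
have hr2 : r2 * q <= q / 4.
  rewrite /r2 mulrC -subr_ge0.
  have -> : q / 4 - q * (M2 / (4 * E)) = q / (4 * E) * (M1 + M3 + 1).
    by move: En; rewrite /E => En; field.
  by apply: mulr_ge0; [apply: divr_ge0 => //; lra | lra].
have -> : q + c * (kp * np + kp * ns + b1 + b2 + c * b3) =
   q + u * np + u * ns + c * b1 + c * b2 + c * (c * b3) by rewrite /u; ring.
have unp : 0 <= u * np by rewrite mulr_ge0 // ltW.
have uns : 0 <= u * ns by rewrite mulr_ge0 // ltW.
case/or3P: hne => [pn0|yn0|sn0].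
- have : 0 < u * np by rewrite mulr_gt0 // /np nrm2_gt0.
  lra.
- have : 0 < q by apply: hS.
  lra.
- have : 0 < u * ns by rewrite mulr_gt0 // /ns nrm2_gt0.
  lra.
Qed.
End Pos.

Section Step.
Variable R : realType.

Lemma skew_block n k l (W : 'M[R]_n) (X : 'M_(k,n)) (Y : 'M_(l,n)) :
  W^T = - W -> X *m W *m Y^T = - (Y *m W *m X^T)^T.
Proof. by move=> h; rewrite !trmx_mul trmxK h mulNmx mulmxN opprK mulmxA. Qed.

Lemma bf_mull k l l' (M : 'M[R]_(k,l)) (X : 'M_(l', k)) y s :
  bf M (y *m X) s = bf (X *m M) y s.
Proof. by rewrite /bf mulmxA. Qed.

Lemma tamed_bf n (W J : 'M[R]_n) y : bform W y (y *m J) = bf (W *m J^T) y y.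
Proof. by rewrite bformE /bf trmx_mul !mulmxA. Qed.

Lemma tamed_posdef n (W J : 'M[R]_n) : tamed W J -> posdef (W *m J^T).
Proof. by move=> h y /h; rewrite tamed_bf. Qed.

Lemma step n k m (W0 W1 : 'M[R]_n) (P P' : 'M[R]_(k,n)) (U : 'M[R]_(m,n))
  (N K : 'M[R]_k) (ka kb : R) (J' : 'M[R]_m) :
  W0^T = - W0 -> W1^T = - W1 ->
  P *m W0 *m P^T = 0 -> P *m W0 *m U^T = 0 -> P *m W0 *m P'^T = 1%:M ->
  U *m W0 *m P'^T = 0 -> P' *m W0 *m P'^T = 0 ->
  P *m W1 *m P^T = 0 -> P *m W1 *m U^T = 0 -> P *m W1 *m P'^T = N ->
  row_free (col_mx P (col_mx U P')) -> (k + (m + k))%N = n ->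
  0 < ka -> 0 < kb ->
  (forall p, bf K p p = ka * nrm2 p) -> (forall p, bf (N *m K^T) p p = kb * nrm2 p) ->
  complex_structure J' -> tamed (U *m W0 *m U^T) J' -> tamed (U *m W1 *m U^T) J' ->
  exists J, [/\ complex_structure J, tamed W0 J & tamed W1 J].
Proof.
move=> sk0 sk1 b0pp b0pu b0pq b0uq b0qq b1pp b1pu b1pq hfree hdim ka0 kb0 hK hN
  cJ' t0 t1.
have uK : K \in unitmx.
  by apply: posdef_unit => p /nrm2_gt0 hp; rewrite hK mulr_gt0.
set Ki := invmx K.
have hKi : K *m Ki = 1%:M by rewrite mulmxV.
set Q0 := K *m P'.
set D0 := U *m W1 *m Q0^T.
set H0 := Q0 *m W1 *m Q0^T.
have [c [c0 hc]] := final_pos D0 (- (J' *m D0)) H0 kb0 (tamed_posdef t1).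
set Q := c *: Q0.
have freeQ : row_free (col_mx P (col_mx U Q)).
  apply: free_of_ker => w hw.
  have hw' := hsubmxK w; have hw'' := hsubmxK (rsubmx w).
  set p := lsubmx w in hw' hw''; set y := lsubmx (rsubmx w) in hw''.
  set s := rsubmx (rsubmx w) in hw''.
  move: hw; rewrite -hw' -hw'' !mul_row_col /Q /Q0 scalemxAl mulmxA => hw.
  have := mulmx_free_eq0 (row_mx p (row_mx y (s *m (c *: K)))) hfree.
  rewrite !mul_row_col hw eqxx => /esym /eqP h0.
  have : row_mx p (row_mx y (s *m (c *: K))) = row_mx 0 (row_mx 0 0) by rewrite !row_mx0.
  case/eq_row_mx => -> /eq_row_mx [-> hs].
  have -> : s = 0.
    have := congr1 (fun x => x *m Ki) hs.
    rewrite mul0mx -scalemxAr -scalemxAl -mulmxA hKi mulmx1 => /eqP.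
    by rewrite scaler_eq0 gt_eqF //= => /eqP.
  by rewrite !row_mx0.
have [Qi [hQ1 hQ2]] := inv_of_free hdim freeQ.
have [J [hJ hv]] := core hQ1 hQ2 cJ'.
have bQ l (X : 'M[R]_(l, n)) (W : 'M[R]_n) : X *m W *m Q^T = c *: (X *m W *m Q0^T).
  by rewrite /Q linearZ /= -scalemxAr.
have bQ0 l (X : 'M[R]_(l, n)) (W : 'M[R]_n) : X *m W *m Q0^T = X *m W *m P'^T *m K^T.
  by rewrite /Q0 trmx_mul !mulmxA.
have bQl l (Y : 'M[R]_(l, n)) (W : 'M[R]_n) : Q *m W *m Y^T = c *: (Q0 *m W *m Y^T).
  by rewrite /Q -!scalemxAl.
have e0up : U *m W0 *m P^T = 0 by rewrite (skew_block _ _ sk0) b0pu trmx0 oppr0.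
have e0pq : P *m W0 *m Q^T = c *: K^T by rewrite bQ bQ0 b0pq mul1mx.
have e0uq : U *m W0 *m Q^T = 0 by rewrite bQ bQ0 b0uq mul0mx scaler0.
have e0qp : Q *m W0 *m P^T = - (c *: K) by rewrite (skew_block _ _ sk0) e0pq linearZ /= trmxK.
have e0qu : Q *m W0 *m U^T = 0 by rewrite (skew_block _ _ sk0) e0uq trmx0 oppr0.
have e0qq : Q *m W0 *m Q^T = 0.
  rewrite bQ bQl.
  have -> : Q0 *m W0 *m Q0^T = K *m (P' *m W0 *m P'^T) *m K^T.
    by rewrite /Q0 trmx_mul !mulmxA.
  by rewrite b0qq mulmx0 mul0mx !scaler0.
have e1up : U *m W1 *m P^T = 0 by rewrite (skew_block _ _ sk1) b1pu trmx0 oppr0.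
have e1pq : P *m W1 *m Q^T = c *: (N *m K^T) by rewrite bQ bQ0 b1pq.
have e1uq : U *m W1 *m Q^T = c *: D0 by rewrite bQ.
have e1qp : Q *m W1 *m P^T = - (c *: (N *m K^T))^T by rewrite (skew_block _ _ sk1) e1pq.
have e1qu : Q *m W1 *m U^T = - (c *: D0)^T by rewrite (skew_block _ _ sk1) e1uq.
have e1qq : Q *m W1 *m Q^T = c *: (c *: H0) by rewrite bQ bQl.
exists J; split => //.
  move=> v vn0; have [p [y [s [hne hW]]]] := hv v.
  rewrite hW b0pp b0pu e0pq e0up e0uq e0qp e0qu e0qq.
  rewrite !bf0M !bfMZ !bfMN !bfNr opprK [bf K^T _ _]bf_tr trmxK !hK bfMZ hK.
  rewrite !add0r !addr0 -bformE.
  have np0 := nrm2_ge0 p; have ns0 := nrm2_ge0 s.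
  have q0 : 0 <= bform (U *m W0 *m U^T) y (y *m J').
    by have [->|/t0/ltW//] := eqVneq y 0; rewrite mul0mx bformE bf0l.
  have u0 : 0 < c * ka by rewrite mulr_gt0.
  have unp : 0 <= c * (ka * nrm2 p) by rewrite mulrA mulr_ge0 // ltW.
  have uns : 0 <= c * (ka * nrm2 s) by rewrite mulrA mulr_ge0 // ltW.
  case/or3P: (hne vn0) => [pn0|yn0|sn0].
  - have : 0 < c * (ka * nrm2 p) by rewrite mulrA mulr_gt0 // nrm2_gt0.
    lra.
  - have := t0 _ yn0; lra.
  - have : 0 < c * (ka * nrm2 s) by rewrite mulrA mulr_gt0 // nrm2_gt0.
    lra.
move=> v vn0; have [p [y [s [hne hW]]]] := hv v.
rewrite hW b1pp b1pu e1pq e1up e1uq e1qp e1qu e1qq.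
rewrite !bf0M !bfMZ !bfMN !bfNr opprK !linearZ /= !bfMZ.
rewrite [bf (N *m K^T)^T _ _]bf_tr trmxK hN.
rewrite [bf D0^T _ _]bf_tr trmxK bf_mull.
have := hc y p s (hne vn0); rewrite bfMN -tamed_bf bformE hN.
by congr (0 < _); ring.
Qed.
End Step.

Section Basis.
Variable R : realType.

Lemma red_sympl n k m (W : 'M[R]_n) (P P' : 'M[R]_(k,n)) (U : 'M[R]_(m,n)) (M : 'M[R]_k) :
  symplectic W -> P *m W *m P^T = 0 -> P *m W *m U^T = 0 -> P *m W *m P'^T = M ->
  M \in unitmx -> row_free (col_mx P (col_mx U P')) -> (k + (m + k))%N = n ->
  symplectic (U *m W *m U^T).
Proof.
move=> hW hpp hpu hpq hM hfree hdim.
have sk := alt_skew hW.1.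
split=> [y|y hy]; first by rewrite bformE -bf_mul -bformE hW.1.
have [Qi [hQ1 hQ2]] := inv_of_free hdim hfree.
set C := U *m W *m P'^T.
set a := - (y *m (C *m invmx M)).
have hx : forall v, bform W (a *m P + (y *m U + 0 *m P')) v = 0.
  move=> v; set w := v *m Qi.
  have hv : v = w *m col_mx P (col_mx U P') by rewrite /w -mulmxA hQ1 mulmx1.
  rewrite hv Pm_split bformE bf_expand hpp hpu hpq.
  rewrite (skew_block _ _ sk) hpu trmx0 oppr0.
  have := hy (lsubmx (rsubmx w)); rewrite bformE => ->.
  rewrite !bf0M !bf0l /a bfNl bf_mull mulmxKV // -/C.
  by rewrite !add0r !addr0 addNr.
have x0 := hW.2 _ hx.
have : row_mx a (row_mx y 0) *m col_mx P (col_mx U P') = 0 by rewrite !mul_row_col.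
move/eqP; rewrite mulmx_free_eq0 // => /eqP h.
have : row_mx a (row_mx y 0) = row_mx 0 (row_mx 0 (0 : 'rV_k)) by rewrite !row_mx0.
by case/eq_row_mx => _ /eq_row_mx [].
Qed.


Lemma basis_ex n k (W0 : 'M[R]_n) (P : 'M[R]_(k,n)) :
  symplectic W0 -> row_free P -> P *m W0 *m P^T = 0 ->
  exists m (P' : 'M[R]_(k,n)) (U : 'M[R]_(m,n)),
   (k + (m + k))%N = n /\
   [/\ P *m W0 *m U^T = 0, P *m W0 *m P'^T = 1%:M, U *m W0 *m P'^T = 0,
       P' *m W0 *m P'^T = 0 & row_free (col_mx P (col_mx U P'))].
Proof.
move=> hW hP hpp.
have sk := alt_skew hW.1.
have uW := sympl_unit hW.
have fPW : row_free (P *m W0).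
  by rewrite /row_free mxrankMfree ?row_free_unit //; exact: hP.
case/row_freeP: fPW => B hB.
set X := B^T.
set G := X *m W0 *m X^T.
have sG : G^T = - G by rewrite [in RHS]/G (skew_block X X sk) opprK.
set P' := X - (2^-1 *: G) *m P.
have hxp : X *m W0 *m P^T = - 1%:M.
  by rewrite (skew_block _ _ sk) /X trmxK hB trmx1.
have hpq : P *m W0 *m P'^T = 1%:M.
  rewrite /P' linearD /= linearN /= trmx_mul mulmxDr mulmxN mulmxA hpp mul0mx subr0.
  by rewrite /X trmxK hB.
have hqq : P' *m W0 *m P'^T = 0.
  rewrite /P' linearD /= linearN /= trmx_mul !mulmxDr !mulmxDl !mulmxN !mulNmx.
  rewrite !mulmxA hxp.
  have hPX : P *m W0 *m X^T = 1%:M by rewrite /X trmxK hB.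
  have -> : 2^-1 *: G *m P *m W0 *m X^T = 2^-1 *: G.
    by rewrite -!mulmxA (mulmxA P) hPX mulmx1.
  have -> : 2^-1 *: G *m P *m W0 *m P^T = 0.
    by rewrite -!mulmxA (mulmxA P) hpp mulmx0.
  rewrite mul0mx oppr0 subr0 mulNmx mul1mx opprK linearZ /=.
  rewrite [(2^-1 *: G)^T]linearZ /= sG -/G.
  have h2 : (2^-1 + 2^-1 : R) = 1 by field.
  by rewrite !scalerN -addrA -opprD -scalerDl h2 scale1r addrN.
clearbody P'.
set T := col_mx P P'.
have hlin2 l' (a b : 'rV[R]_k) (V : 'M[R]_(n, l')) :
   (a *m P + b *m P') *m W0 *m V = a *m (P *m W0 *m V) + b *m (P' *m W0 *m V).
  by rewrite !mulmxDl !mulmxA.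
have hqp : P' *m W0 *m P^T = - 1%:M by rewrite (skew_block _ _ sk) hpq trmx1.
have fT : row_free T.
  apply: free_of_ker => w; rewrite -(hsubmxK w) mul_row_col => h.
  have := congr1 (fun z => z *m W0 *m P'^T) h; rewrite /= hlin2 hpq hqq.
  rewrite mulmx1 mulmx0 addr0 !mul0mx => ha.
  have := congr1 (fun z => z *m W0 *m P^T) h; rewrite /= hlin2 hpp hqp.
  rewrite mulmx0 add0r mulmxN mulmx1 !mul0mx => /eqP; rewrite oppr_eq0 => /eqP hb.
  by rewrite ha hb row_mx0.
set U := row_base (kermx (W0 *m T^T)).
exists (\rank (kermx (W0 *m T^T))), P', U.
have hU : U *m (W0 *m T^T) = 0 by apply/sub_kermxP; rewrite eq_row_base.
have eg r (Z : 'M[R]_(r, n)) :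
    Z *m (W0 *m (col_mx P P')^T) = row_mx (Z *m W0 *m P^T) (Z *m W0 *m P'^T).
  by rewrite tr_col_mx !mul_mx_row !mulmxA.
have e := eg _ U.
have : row_mx (U *m W0 *m P^T) (U *m W0 *m P'^T) = row_mx 0 0 by rewrite -e hU row_mx0.
case/eq_row_mx => hup huq.
have hpu : P *m W0 *m U^T = 0 by rewrite (skew_block _ _ sk) hup trmx0 oppr0.
split.
  rewrite mxrank_ker -mxrank_tr trmx_mul trmxK mxrankMfree; last first.
    by rewrite row_free_unit unitmx_tr.
  have : \rank T = (k + k)%N by apply/eqP.
  move=> ->; have := rank_leq_col T; rewrite (eqP fT); lia.
have hqu : P' *m W0 *m U^T = 0 by rewrite (skew_block _ _ sk) huq trmx0 oppr0.
split => //.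
apply: free_of_ker => w; rewrite -(hsubmxK w) -(hsubmxK (rsubmx w)) !mul_row_col.
set a := lsubmx w; set y := lsubmx (rsubmx w); set b := rsubmx (rsubmx w).
move=> h.
have hlin3 l' (V : 'M[R]_(n, l')) :
   (a *m P + (y *m U + b *m P')) *m W0 *m V =
   a *m (P *m W0 *m V) + (y *m (U *m W0 *m V) + b *m (P' *m W0 *m V)).
  by rewrite !mulmxDl !mulmxA.
have := congr1 (fun z => z *m W0 *m P'^T) h; rewrite /= hlin3 hpq hqq huq.
rewrite mulmx1 !mulmx0 !addr0 !mul0mx => ha.
have := congr1 (fun z => z *m W0 *m P^T) h; rewrite /= hlin3 hpp hqp hup.
rewrite !mulmx0 !add0r mulmxN mulmx1 !mul0mx => /eqP; rewrite oppr_eq0 => /eqP hb.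
move: h; rewrite ha hb !mul0mx add0r addr0 => /eqP.
rewrite mulmx_free_eq0 ?row_base_free // => /eqP ->.
by rewrite !row_mx0.
Qed.
End Basis.

Section Two.
Variable R : realType.
Local Notation c0 p := (p 0 (lshift 1 ord0)).
Local Notation c1 p := (p 0 (rshift 1 ord0)).

Lemma rv_blk (p : 'rV[R]_(1+1)) (al be ga de : R) :
  p *m block_mx al%:M be%:M ga%:M de%:M =
  row_mx (c0 p * al + c1 p * ga)%:M (c0 p * be + c1 p * de)%:M.
Proof.
rewrite -{1}(hsubmxK p) mul_row_block !mul_mx_scalar.
by congr row_mx; apply/matrixP => i j; rewrite !ord1 !mxE /= !mulr1n; ring.
Qed.

Lemma bf_blk (p q : 'rV[R]_(1+1)) (al be ga de : R) :
  bf (block_mx al%:M be%:M ga%:M de%:M) p q =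
  (c0 p * al + c1 p * ga) * c0 q + (c0 p * be + c1 p * de) * c1 q.
Proof.
rewrite /bf rv_blk -{1}(hsubmxK q) tr_row_mx mul_row_col mxE.
by rewrite !mul_scalar_mx !mxE.
Qed.

Lemma nrm2_two (p : 'rV[R]_(1+1)) : nrm2 p = c0 p ^+ 2 + c1 p ^+ 2.
Proof. by rewrite nrm2E big_split_ord !big_ord1. Qed.

End Two.

Section Eig.
Variable R : realType.

Definition edata n (W0 W1 : 'M[R]_n) := exists k (P : 'M[R]_(k,n)) (N K : 'M[R]_k) (ka kb : R),
 [/\ (0 < k)%N, row_free P, P *m W0 *m P^T = 0, P *m W1 = N *m P *m W0 &
   [/\ 0 < ka, 0 < kb, (forall p, bf K p p = ka * nrm2 p) &
       (forall p, bf (N *m K^T) p p = kb * nrm2 p)]].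

Lemma mx11_0 (M : 'M[R]_1) : M 0 0 = 0 -> M = 0.
Proof. by move=> h; apply/matrixP => i j; rewrite !ord1 h mxE. Qed.

Lemma nondeg_mul n (W : 'M[R]_n) (u : 'rV[R]_n) : symplectic W -> u *m W = 0 -> u = 0.
Proof. by case=> _ h hu; apply: h => v; rewrite bformE /bf hu mul0mx mxE. Qed.

Lemma eig_real n (W0 W1 : 'M[R]_n) (u : 'rV[R]_n) (lam : R) :
  symplectic W0 -> symplectic W1 -> (forall tau, 0 <= tau -> symplectic (W0 + tau *: W1)) ->
  u != 0 -> u *m W1 = lam *: (u *m W0) -> edata W0 W1.
Proof.
move=> h0 h1 h2 un0 hu.
have lam0 : 0 < lam.
  have [lt|gt|eq] := ltgtP lam 0; last first.
  - by move: un0; rewrite (nondeg_mul h1 (u:=u)) ?eqxx // hu eq scale0r.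
  - by [].
  have ht : 0 <= - lam^-1 by rewrite oppr_ge0 invr_le0 ltW.
  move: un0; rewrite (nondeg_mul (h2 _ ht) (u:=u)) ?eqxx //.
  rewrite mulmxDr -scalemxAr hu scalerA mulNr mulVf ?ltr0_neq0 //.
  by apply/matrixP => i j; rewrite !mxE; ring.
exists 1%N, u, lam%:M, 1%:M, 1, lam; split => //.
- apply: free_of_ker => w; rewrite [w]mx11_scalar mul_scalar_mx => /eqP.
  rewrite scaler_eq0 (negbTE un0) orbF => /eqP->.
  by apply/matrixP => i j; rewrite !ord1 !mxE.
- by apply: mx11_0; have := h0.1 u; rewrite bformE.
- by rewrite mul_scalar_mx -scalemxAl hu.
split => // p; first by rewrite bf1n mul1r.
by rewrite trmx1 mulmx1 -scalemx1 bfMZ bf1n.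
Qed.


Lemma bf_NKt k (N K : 'M[R]_k) p : bf (N *m K^T) p p = bf N p (p *m K).
Proof. by rewrite /bf trmx_mul !mulmxA. Qed.

Lemma eig_cplx n (W0 W1 : 'M[R]_n) (x y : 'rV[R]_n) (a b : R) :
  symplectic W0 -> symplectic W1 -> b != 0 -> (x != 0) || (y != 0) ->
  x *m W1 = (a *: x - b *: y) *m W0 -> y *m W1 = (b *: x + a *: y) *m W0 -> edata W0 W1.
Proof.
move=> h0 h1 bn0 xy0 hx hy.
set e := (1 - a) / b.
have sk0 := alt_antisym h0.1.
have bxx : bf W0 x x = 0 by have := h0.1 x.
have byy : bf W0 y y = 0 by have := h0.1 y.
have byx : bf W0 y x = 0.
  have := h1.1 x; rewrite bformE /bf hx -/(bf W0 _ x) bfDl bfNl !bfZl bxx mulr0 add0r.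
  by move/eqP; rewrite oppr_eq0 mulf_eq0 (negbTE bn0) /= => /eqP.
have bxy : bf W0 x y = 0 by rewrite sk0 byx oppr0.
exists (1 + 1)%N, (col_mx x y), (block_mx a%:M (- b)%:M b%:M a%:M),
  (block_mx 1%:M (- e)%:M e%:M 1%:M), 1, 1; split => //.
- apply: free_of_ker => w; rewrite -(hsubmxK w) mul_row_col.
  rewrite [lsubmx w]mx11_scalar [rsubmx w]mx11_scalar !mul_scalar_mx.
  set al := lsubmx w 0 0; set be := rsubmx w 0 0 => h.
  have hz : (be *: x - al *: y) *m W0 = 0.
    have := congr1 (fun z => z *m W1) h; rewrite /= mul0mx mulmxDl -!scalemxAl hx hy.
    rewrite !scalemxAl -mulmxDl.
    have -> : al *: (a *: x - b *: y) + be *: (b *: x + a *: y) =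
       a *: (al *: x + be *: y) + b *: (be *: x - al *: y).
      by apply/matrixP => i j; rewrite !mxE; ring.
    rewrite h scaler0 add0r -scalemxAl => /eqP; rewrite scaler_eq0 (negbTE bn0) /=.
    by move/eqP.
  have z := nondeg_mul h0 hz.
  have ex : (al ^+ 2 + be ^+ 2) *: x = 0.
    have -> : (al ^+ 2 + be ^+ 2) *: x = al *: (al *: x + be *: y) + be *: (be *: x - al *: y).
      by apply/matrixP => i j; rewrite !mxE; ring.
    by rewrite h z !scaler0 addr0.
  have ey : (al ^+ 2 + be ^+ 2) *: y = 0.
    have -> : (al ^+ 2 + be ^+ 2) *: y = be *: (al *: x + be *: y) - al *: (be *: x - al *: y).
      by apply/matrixP => i j; rewrite !mxE; ring.
    by rewrite h z !scaler0 subr0.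
  have s0 : al ^+ 2 + be ^+ 2 = 0.
    apply/eqP; apply/negPn/negP => sn.
    move: ex ey => /eqP; rewrite scaler_eq0 (negbTE sn) /= => /eqP ex /eqP.
    rewrite scaler_eq0 (negbTE sn) /= => /eqP ey.
    by move: xy0; rewrite ex ey eqxx.
  move: s0 => /eqP; rewrite paddr_eq0 ?sqr_ge0 // !sqrf_eq0 => /andP[/eqP-> /eqP->].
  by rewrite raddf0 row_mx0.
- rewrite tr_col_mx mul_col_mx mul_col_row.
  have z0 u v : bf W0 u v = 0 -> u *m W0 *m v^T = 0 by move=> h; apply: mx11_0.
  by rewrite !z0 // block_mx0.
- rewrite !mul_col_mx !mul_row_col hx hy !mul_scalar_mx.
  by rewrite scaleNr.
split => // p.
- by rewrite bf_blk nrm2_two /=; ring.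
rewrite bf_NKt rv_blk bf_blk nrm2_two.
rewrite row_mxEl row_mxEr !mxE /= !mulr1n.
by rewrite /e; field.
Qed.


Lemma ReM (z w : R[i]) : complex.Re (z * w) = complex.Re z * complex.Re w - complex.Im z * complex.Im w.
Proof. by case: z => a b; case: w => c d. Qed.
Lemma ImM (z w : R[i]) : complex.Im (z * w) = complex.Re z * complex.Im w + complex.Im z * complex.Re w.
Proof. by case: z => a b; case: w => c d. Qed.

Lemma edata_ex n (W0 W1 : 'M[R]_n) : (0 < n)%N ->
  symplectic W0 -> symplectic W1 -> (forall tau, 0 <= tau -> symplectic (W0 + tau *: W1)) ->
  edata W0 W1.
Proof.
move=> n0 h0 h1 h2.
have uW0 := sympl_unit h0.
set A := W1 *m invmx W0.
have hA : A *m W0 = W1 by rewrite /A mulmxKV.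
set AC := map_mx (real_complex R) A.
have [lam] : exists lam, root (char_poly AC) lam.
  by apply/closed_rootP; rewrite size_char_poly; case: n n0 {W0 W1 h0 h1 h2 uW0 A hA AC}.
rewrite -eigenvalue_root_char => /eigenvalueP [v hv vn0].
have [hIm|hIm] := eqVneq (complex.Im lam) 0.
  have : eigenvalue A (complex.Re lam).
    rewrite eigenvalue_root_char -(fmorph_root (real_complex R)) map_char_poly -/AC.
    rewrite [X in root _ X](_ : _ = lam); last by case: lam hIm {hv} => a b /= ->.
    by rewrite -eigenvalue_root_char; apply/eigenvalueP; exists v.
  case/eigenvalueP => u hu un0.
  by apply: (eig_real h0 h1 h2 un0); rewrite -hA mulmxA hu scalemxAl.
set x := map_mx (@complex.Re R) v; set y := map_mx (@complex.Im R) v.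
have ex j : (x *m A) 0 j = complex.Re lam * x 0 j - complex.Im lam * y 0 j.
  have := congr1 (fun M : 'rV[R[i]]_n => complex.Re (M 0 j)) hv; rewrite /= !mxE raddf_sum /= ReM.
  move=> <-; apply: eq_bigr => i _; rewrite !mxE ReM /=.
  by rewrite mulr0 subr0.
have ey j : (y *m A) 0 j = complex.Im lam * x 0 j + complex.Re lam * y 0 j.
  have := congr1 (fun M : 'rV[R[i]]_n => complex.Im (M 0 j)) hv; rewrite /= !mxE raddf_sum /= ImM.
  rewrite addrC => <-; apply: eq_bigr => i _; rewrite !mxE ImM /=.
  by rewrite mulr0 add0r.
apply: (eig_cplx (x := x) (y := y) (a := complex.Re lam) (b := complex.Im lam) h0 h1 hIm).
- apply/negPn/negP; rewrite negb_or !negbK => /andP[/eqP hx /eqP hy].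
  move: vn0; apply/negP/negPn/eqP/matrixP => i j; rewrite !mxE.
  have := congr1 (fun M : 'rV[R]_n => M i j) hx; have := congr1 (fun M : 'rV[R]_n => M i j) hy.
  rewrite !mxE; case: (v i j) => a b /= -> ->; by [].
- rewrite -hA mulmxA; congr (_ *m W0); apply/matrixP => i j; rewrite !ord1 ex.
  by rewrite !mxE.
- rewrite -hA mulmxA; congr (_ *m W0); apply/matrixP => i j; rewrite !ord1 ey.
  by rewrite !mxE.
Qed.

End Eig.

Section Main.
Variable R : realType.

Lemma unit_of_pos k (N K : 'M[R]_k) ka kb (tau : R) : 0 < ka -> 0 < kb -> 0 <= tau ->
  (forall p, bf K p p = ka * nrm2 p) -> (forall p, bf (N *m K^T) p p = kb * nrm2 p) ->
  (1%:M + tau *: N) \in unitmx.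
Proof.
move=> ka0 kb0 t0 hK hN; rewrite -row_free_unit; apply: free_of_ker => p hp.
have : bf ((1%:M + tau *: N) *m K^T) p p = 0 by rewrite /bf mulmxA hp !mul0mx mxE.
rewrite mulmxDl mul1mx -scalemxAl bfMD bfMZ hN [bf K^T _ _]bf_tr trmxK hK.
move=> h; apply/eqP; rewrite -nrm2_eq0; apply/eqP.
have hp0 := nrm2_ge0 p.
have : (ka + tau * kb) * nrm2 p = 0 by rewrite -[RHS]h; ring.
move/eqP; rewrite mulf_eq0 => /orP[|/eqP //].
have : 0 < ka + tau * kb by rewrite ltr_wpDr // mulr_ge0 // ltW.
by move=> /gt_eqF ->.
Qed.

Lemma unitN k (N K : 'M[R]_k) kb : 0 < kb ->
  (forall p, bf (N *m K^T) p p = kb * nrm2 p) -> N \in unitmx.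
Proof.
move=> kb0 hN; rewrite -row_free_unit; apply: free_of_ker => p hp.
have := hN p; rewrite /bf mulmxA hp !mul0mx mxE => /esym /eqP.
by rewrite mulf_eq0 gt_eqF //= nrm2_eq0 => /eqP.
Qed.

Theorem main23 n (W0 W1 : 'M[R]_n) : symplectic W0 -> symplectic W1 ->
  (forall tau, 0 <= tau -> symplectic (W0 + tau *: W1)) ->
  exists J, [/\ complex_structure J, tamed W0 J & tamed W1 J].
Proof.
elim/ltn_ind: n W0 W1 => n IH W0 W1 h0 h1 h2.
case: n IH W0 W1 h0 h1 h2 => [|n'] IH W0 W1 h0 h1 h2.
  exists 0; split.
  - by rewrite /complex_structure [LHS]flatmx0 [RHS]flatmx0.
  - by move=> v; rewrite thinmx0 eqxx.
  - by move=> v; rewrite thinmx0 eqxx.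
have [k [P [N [K [ka [kb [k0 fP b0pp hPW [ka0 kb0 hK hN]]]]]]]] := edata_ex (ltn0Sn n') h0 h1 h2.
have [m [P' [U [hdim [b0pu b0pq b0uq b0qq hfree]]]]] := basis_ex h0 fP b0pp.
have b1 l (X : 'M[R]_(l, n'.+1)) : P *m W1 *m X^T = N *m (P *m W0 *m X^T).
  by rewrite hPW !mulmxA.
have b1pp : P *m W1 *m P^T = 0 by rewrite b1 b0pp mulmx0.
have b1pu : P *m W1 *m U^T = 0 by rewrite b1 b0pu mulmx0.
have b1pq : P *m W1 *m P'^T = N by rewrite b1 b0pq mulmx1.
have uN : N \in unitmx := unitN kb0 hN.
have sk0 := alt_skew h0.1; have sk1 := alt_skew h1.1.
have hmn : (m < n'.+1)%N by rewrite -hdim; lia.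
have s0 : symplectic (U *m W0 *m U^T).
  by apply: (red_sympl h0 b0pp b0pu b0pq (unitmx1 _ _) hfree hdim).
have s1 : symplectic (U *m W1 *m U^T).
  by apply: (red_sympl h1 b1pp b1pu b1pq uN hfree hdim).
have s2 tau : 0 <= tau -> symplectic (U *m W0 *m U^T + tau *: (U *m W1 *m U^T)).
  move=> t0; have := unit_of_pos ka0 kb0 t0 hK hN => uM.
  have -> : U *m W0 *m U^T + tau *: (U *m W1 *m U^T) = U *m (W0 + tau *: W1) *m U^T.
    by rewrite mulmxDr mulmxDl -scalemxAr -scalemxAl.
  apply: (red_sympl (h2 _ t0) _ _ _ uM hfree hdim).
  - by rewrite mulmxDr mulmxDl -scalemxAr -scalemxAl b0pp b1pp scaler0 addr0.
  - by rewrite mulmxDr mulmxDl -scalemxAr -scalemxAl b0pu b1pu scaler0 addr0.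
  - by rewrite mulmxDr mulmxDl -scalemxAr -scalemxAl b0pq b1pq.
have [J' [cJ' t0 t1]] := IH m hmn _ _ s0 s1 s2.
by apply: (step sk0 sk1 b0pp b0pu b0pq b0uq b0qq b1pp b1pu b1pq hfree hdim ka0 kb0 hK hN cJ' t0 t1).
Qed.
End Main.

Section Final.
Variable R : realType.

Lemma bformMD n (W V : 'M[R]_n) u v : bform (W + V) u v = bform W u v + bform V u v.
Proof. by rewrite !bformE bfMD. Qed.
Lemma bformMZ n (W : 'M[R]_n) a u v : bform (a *: W) u v = a * bform W u v.
Proof. by rewrite !bformE bfMZ. Qed.

Lemma sympl_scale n (W : 'M[R]_n) a : a != 0 -> symplectic (a *: W) -> symplectic W.
Proof.
move=> an0 [h1 h2]; split=> [v|u hu].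
  by have := h1 v; rewrite bformMZ => /eqP; rewrite mulf_eq0 (negbTE an0) => /eqP.
by apply: h2 => v; rewrite bformMZ hu mulr0.
Qed.

Lemma tamed_sympl n (W J : 'M[R]_n) : (forall v, bform W v v = 0) -> tamed W J -> symplectic W.
Proof.
move=> ha ht; split => // u hu; apply/eqP/negPn/negP => /ht.
by rewrite hu ltxx.
Qed.

End Final.

Unset Implicit Arguments.

Theorem proposition1p2 (R : realType) (n : nat) (W0 W1 : 'M[R]_n) :
  symplectic W0 -> symplectic W1 ->
  [<-> (forall t : R, 0 <= t <= 1 -> symplectic ((1 - t) *: W0 + t *: W1));
       (forall tau : R, 0 <= tau -> symplectic (W0 + tau *: W1));
       (exists J : 'M[R]_n, [/\ complex_structure J, tamed W0 J & tamed W1 J])].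
Proof.
move=> h0 h1; tfae.
- move=> h tau t0.
  have t1 : 0 < 1 + tau by rewrite ltr_pwDl.
  have t1n : 1 + tau != 0 by rewrite gt_eqF.
  have hc : 0 <= tau / (1 + tau) <= 1.
    apply/andP; split; first by rewrite divr_ge0 // ltW.
    by rewrite ler_pdivrMr // mul1r lerDr.
  have := h _ hc.
  have -> : (1 - tau / (1 + tau)) *: W0 + (tau / (1 + tau)) *: W1 =
            (1 + tau)^-1 *: (W0 + tau *: W1).
    rewrite scalerDr scalerA; congr (_ *: _ + _ *: _); first by field.
    by rewrite mulrC.
  by apply: sympl_scale; rewrite invr_eq0.
- by move=> h; apply: main23.
case=> J [cJ t0 t1] t /andP[ta tb].
apply: (tamed_sympl (J := J)).
  by move=> v; rewrite bformMD !bformMZ h0.1 h1.1 !mulr0 addr0.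
move=> v vn0; rewrite bformMD !bformMZ.
have b0 := t0 v vn0; have b1 := t1 v vn0.
have [tl|te] := ltP t 1.
  have : 0 < (1 - t) * bform W0 v (v *m J) by rewrite mulr_gt0 // subr_gt0.
  have : 0 <= t * bform W1 v (v *m J) by rewrite mulr_ge0 // ltW.
  lra.
have -> : t = 1 by apply/eqP; rewrite eq_le tb te.
by rewrite subrr mul0r add0r mul1r.
Qed.
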